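(* Let $\mathbb K$ be a naturally ordered positive semiring, $q$ a self-join-free conjunctive query, and $\Sigma$ a set of key constraints with one key per relation of $q$. Let $\mathfrak D$ be a $\mathbb K$-database and $\gamma$ an assignment such that $\mathfrak D',\gamma\models_{\mathbb K} q$ for every repair $\mathfrak D'\in\mathrm{Rep}(\mathfrak D,\Sigma)$, and let $x$ be a variable that is bound in $q$ and unattacked in $q$. Then there is an element $c\in D$ such that $\mathfrak D',\gamma(c/x)\models_{\mathbb K} q[x]$ for every repair $\mathfrak D'$ of $\mathfrak D$.
   Context: Semirings. A commutative semiring $\mathbb K=(K,+,\times,0,1)$ is positive if $a+b=0$ implies $a=b=0$ and it has no zero divisors; naturally ordered if $a\le_{\mathbb K}b:\iff\exists c\,(a+c=b)$ is a total order. Databases. A $\mathbb K$-database $\mathfrak D$ assigns to each relation symbol $R$ a function $R^{\mathfrak D}:\mathrm A^n\to K$ with finite support $\mathrm{Supp}(R^{\mathfrak D})=\{t:R^{\mathfrak D}(t)\neq0\}$; the active domain $D$ is the non-empty set of values occurring in supports. $\mathfrak D'\subseteq\mathfrak D$ means supports are included and values agree on the support of $\mathfrak D'$. An assignment maps variables to $D$; $\gamma(c/x)$ agrees with $\gamma$ except mapping $x$ to $c$. Keys and repairs. Atoms are written $R(\vec y;\vec z)$ with key positions $\vec y$; $\mathfrak D$ satisfies the key of $R$ if two tuples of $\mathrm{Supp}(R^{\mathfrak D})$ that agree on key positions are equal. A repair of $\mathfrak D$ w.r.t. $\Sigma$ is a $\mathbb K$-database $\mathfrak D'\subseteq\mathfrak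 D$ satisfying $\Sigma$ such that no $\mathfrak D''$ with $\mathfrak D'\subsetneq\mathfrak D''\subseteq\mathfrak D$ satisfies $\Sigma$. CQs. $q(\vec x)=\exists\vec y(R_1(\vec z_1)\wedge\dots\wedge R_k(\vec z_k))$ has value $q(\mathfrak D,\alpha)=\sum_{\vec a\in D^{|\vec y|}}\prod_iR_i^{\mathfrak D}(\beta(\vec z_i))$, $\beta=\alpha(\vec a/\vec y)$, and $\mathfrak D,\alpha\models_{\mathbb K}q$ means $q(\mathfrak D,\alpha)\neq 0$. $q[x]$ is $q$ with the quantifier $\exists x$ removed. Attacks. For an atom $R(\vec y;\vec z)$ of $q$, $\Sigma(q\setminus R)$ is the set of functional dependencies $\mathrm{key}(S)\to\mathsf{var}(S)$ for the atoms $S\neq R$ of $q$ (where $\mathrm{key}(S)$ is the set of variables in key positions of $S$), and $\mathsf{var}(\vec y)^+_{\Sigma(q\setminus R)}$ is the set of variables $v$ of $q$ with $\Sigma(q\setminus R)\models\mathsf{var}(\vec y)\to v$. $R(\vec y;\vec z)$ attacks a variable $x$ bound in $q$ if there is a non-empty sequence $x_1,\dots,x_n$ of variables bound in $q$ with $x_1\in\mathsf{var}(\vec z)$, $x_n=x$, consecutive variables co-occurring in some atom of $q$, and no $x_i$ belonging to $\mathsf{var}(\vec y)^+_{\Sigma(q\setminus R)}$. $x$ is unattacked if no atom attacks it. *)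

(* Defs.v *)
From HB Require Import structures.
From mathcomp Require Import all_boot all_order all_algebra.
From mathcomp Require Import finmap.
Set Implicit Arguments. Unset Strict Implicit. Unset Printing Implicit Defensive.
Import Order.TTheory GRing.Theory.
Local Open Scope ring_scope.

Definition positive_semiring (K : comPzSemiRingType) : Prop :=
  (forall a b : K, a + b = 0 -> a = 0 /\ b = 0) /\
  (forall a b : K, a * b = 0 -> a = 0 \/ b = 0).

Definition nat_le (K : comPzSemiRingType) (a b : K) : Prop := exists c, a + c = b.

Definition naturally_ordered (K : comPzSemiRingType) : Prop :=
  (forall a : K, nat_le a a) /\
  (forall a b c : K, nat_le a b -> nat_le b c -> nat_le a c) /\
  (forall a b : K, nat_le a b -> nat_le b a -> a = b) /\
  (forall a b : K, nat_le a b \/ nat_le b a).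

Definition kdb (Sym : finType) (ar : Sym -> nat) (A : choiceType)
  (K : comPzSemiRingType) : Type :=
  forall R : Sym, {fsfun (ar R).-tuple A -> K with 0}.

Section DB.
Variables (Sym : finType) (ar : Sym -> nat) (A : choiceType) (K : comPzSemiRingType).
Notation db := (kdb ar A K).

Definition adom (D : db) : {fset A} :=
  (\bigcup_(R <- enum Sym) \bigcup_(t <- finsupp (D R)) [fset a | a in (t : seq A)])%fset.

Definition subdb (D' D : db) : Prop :=
  forall R : Sym, (finsupp (D' R) `<=` finsupp (D R))%fset /\
    (forall t, t \in finsupp (D' R) -> D' R t = D R t).

(* key constraints: the key of R consists of its first (kl R) positions;
   Sigma contains exactly one key for each relation symbol in [rels]. *)
Definition sat_keys (kl : Sym -> nat) (rels : seq Sym) (D : db) : Prop :=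
  forall R, R \in rels -> forall t1 t2, t1 \in finsupp (D R) -> t2 \in finsupp (D R) ->
    take (kl R) (t1 : seq A) = take (kl R) (t2 : seq A) -> t1 = t2.

Definition repair (kl : Sym -> nat) (rels : seq Sym) (D D' : db) : Prop :=
  subdb D' D /\ sat_keys kl rels D' /\
  ~ (exists D'' : db, subdb D' D'' /\ ~ subdb D'' D' /\ subdb D'' D /\ sat_keys kl rels D'').
End DB.

Definition atom (Sym : finType) (ar : Sym -> nat) (V : choiceType) : Type :=
  {R : Sym & (ar R).-tuple V}.

Record cq (Sym : finType) (ar : Sym -> nat) (V : choiceType) := CQ {
  cq_bound : {fset V};
  cq_atoms : seq (atom ar V) }.

Definition self_join_free (Sym : finType) (ar : Sym -> nat) (V : choiceType) (q : cq ar V) : bool :=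
  uniq [seq tag a | a <- cq_atoms q].

Definition cq_rels (Sym : finType) (ar : Sym -> nat) (V : choiceType) (q : cq ar V) : seq Sym := [seq tag a | a <- cq_atoms q].

Definition cq_free_var (Sym : finType) (ar : Sym -> nat) (V : choiceType) (q : cq ar V) (x : V) : cq ar V :=
  CQ (cq_bound q `\ x)%fset (cq_atoms q).

Section Eval.
Variables (Sym : finType) (ar : Sym -> nat) (A V : choiceType) (K : comPzSemiRingType).

Definition extend (y : {fset V}) (alpha : V -> A) (D0 : {fset A})
  (f : {ffun y -> D0}) : V -> A :=
  fun v => if insub v is Some v' then val (f v') else alpha v.

Definition cq_value (q : cq ar V) (D : kdb ar A K) (alpha : V -> A) : K :=
  \sum_(f : {ffun cq_bound q -> adom D})
     \prod_(a <- cq_atoms q)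
        D (tag a) (map_tuple (extend alpha f) (tagged a)).

Definition models (D : kdb ar A K) (alpha : V -> A) (q : cq ar V) : Prop :=
  cq_value q D alpha != 0.
End Eval.

Definition upd (V : eqType) (A : Type) (g : V -> A) (x : V) (c : A) : V -> A :=
  fun v => if v == x then c else g v.

Section Attack.
Variables (Sym : finType) (ar : Sym -> nat) (V : choiceType) (kl : Sym -> nat).

Definition avars (a : atom ar V) : seq V := tagged a.
Definition akey (a : atom ar V) : seq V := take (kl (tag a)) (tagged a).
Definition anonkey (a : atom ar V) : seq V := drop (kl (tag a)) (tagged a).

Definition cq_vars (q : cq ar V) : seq V := flatten [seq avars a | a <- cq_atoms q].

Definition fd_holds (T : Type) (r : (V -> T) -> Prop) (X Y : seq V) : Prop :=
  forall t1 t2, r t1 -> r t2 -> (forall u, u \in X -> t1 u = t2 u) ->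
    forall u, u \in Y -> t1 u = t2 u.

Definition fds_entail (Sigma : seq (seq V * seq V)) (X : seq V) (v : V) : Prop :=
  forall (T : Type) (r : (V -> T) -> Prop),
    (forall fd, fd \in Sigma -> fd_holds r fd.1 fd.2) -> fd_holds r X [:: v].

Definition sigma_minus (q : cq ar V) (F : atom ar V) : seq (seq V * seq V) :=
  [seq (akey G, avars G) | G <- cq_atoms q & tag G != tag F].

Definition key_closure (q : cq ar V) (F : atom ar V) (v : V) : Prop :=
  v \in cq_vars q /\ fds_entail (sigma_minus q F) (akey F) v.

Definition cooccur (q : cq ar V) (u w : V) : bool :=
  has (fun G => (u \in avars G) && (w \in avars G)) (cq_atoms q).

Definition attacks (q : cq ar V) (F : atom ar V) (x : V) : Prop :=
  exists (x1 : V) (p : seq V),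
    all (fun u => u \in cq_bound q) (x1 :: p) /\
    x1 \in anonkey F /\
    last x1 p = x /\
    path (cooccur q) x1 p /\
    (forall u, u \in x1 :: p -> ~ key_closure q F u).

Definition unattacked (q : cq ar V) (x : V) : Prop :=
  forall F, F \in cq_atoms q -> ~ attacks q F x.
End Attack.

(* Main.v *)
Require Import Defs.
From HB Require Import structures.
From mathcomp Require Import all_boot all_order all_algebra.
From mathcomp Require Import finmap.
From Stdlib Require Import Classical ClassicalEpsilon.
Set Implicit Arguments. Unset Strict Implicit. Unset Printing Implicit Defensive.
Import Order.TTheory GRing.Theory.
Local Open Scope ring_scope.
Local Open Scope fset_scope.

Section Facts.
Variables (K : comPzSemiRingType) (Sym : finType) (ar : Sym -> nat) (kl : Sym -> nat)
  (A V : choiceType).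
Notation db := (kdb ar A K).
Definition fact := {R : Sym & (ar R).-tuple A}.
Definition memf (t : db) (f : fact) : bool := (tagged f) \in finsupp (t (tag f)).
Definition inst (th : V -> A) (G : atom ar V) : fact :=
  existT (fun R => (ar R).-tuple A) (tag G) (map_tuple th (tagged G)).
Definition keyeq (f1 f2 : fact) : Prop :=
  tag f1 = tag f2 /\ take (kl (tag f1)) (tagged f1 : seq A) = take (kl (tag f1)) (tagged f2 : seq A).

Lemma keyeq_sym f1 f2 : keyeq f1 f2 -> keyeq f2 f1.
Proof. by case=> e1 e2; split=> //; have -> : kl (tag f2) = kl (tag f1) by rewrite e1. Qed.
Lemma keyeq_trans f1 f2 f3 : keyeq f1 f2 -> keyeq f2 f3 -> keyeq f1 f3.
Proof.
case=> e1 e2 [e3 e4]; split; first by rewrite e1.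
by rewrite e2; have -> : kl (tag f1) = kl (tag f2) by rewrite e1.
Qed.

Lemma fact_eq (f1 f2 : fact) : tag f1 = tag f2 -> (tagged f1 : seq A) = (tagged f2 : seq A) -> f1 = f2.
Proof.
case: f1 => R1 u1; case: f2 => R2 u2 /= e; subst R2 => e.
by congr existT; apply: val_inj.
Qed.

Lemma fact_val (f1 f2 : fact) : f1 = f2 -> (tagged f1 : seq A) = (tagged f2 : seq A).
Proof. by move=> ->. Qed.

Lemma sat_keysP (rels : seq Sym) (t : db) :
  sat_keys kl rels t <-> (forall f1 f2, tag f1 \in rels -> memf t f1 -> memf t f2 -> keyeq f1 f2 -> f1 = f2).
Proof.
split.
- move=> H [R1 u1] [R2 u2] /= Hr; rewrite /memf /= => m1 m2 [/= e]; subst R2 => /= e.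
  by rewrite (H R1 Hr u1 u2 m1 m2 e).
- move=> H R Hr t1 t2 m1 m2 e.
  have := H (existT _ R t1) (existT _ R t2) Hr m1 m2 (conj erefl e).
  by move/fact_val => /= /val_inj.
Qed.

Variable (D : db).
Definition subD (P : fact -> bool) : db :=
  fun R => [fsfun u in finsupp (D R) => if P (existT _ R u) then D R u else 0].

Lemma subD_val P R u : subD P R u = if P (existT _ R u) then D R u else 0.
Proof.
rewrite /subD fsfun_fun; case: ifP => //.
by rewrite mem_finsupp => /negbFE /eqP ->; case: ifP.
Qed.

Lemma memf_subD P f : memf (subD P) f = memf D f && P f.
Proof.
case: f => R u; rewrite /memf /= !mem_finsupp subD_val.
by case: (P _); rewrite ?eqxx ?andbT ?andbF.
Qed.

Lemma subdbP (X Y : db) : subdb X D -> subdb Y D ->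
  (subdb X Y <-> forall f, memf X f -> memf Y f).
Proof.
move=> HX HY; split.
- by move=> H [R u]; rewrite /memf /= => m; case: (H R) => /fsubsetP s _; apply: s.
- move=> H R; split.
  + by apply/fsubsetP => u m; exact: (H (existT _ R u) m).
  + move=> u m; have m' : u \in finsupp (Y R) by exact: (H (existT _ R u) m).
    by rewrite (HX R).2 // (HY R).2.
Qed.

Lemma subD_sub P : subdb (subD P) D.
Proof.
move=> R; split.
- apply/fsubsetP => u; rewrite !mem_finsupp subD_val; case: ifP => //; by rewrite eqxx.
- by move=> u; rewrite mem_finsupp subD_val; case: ifP => //; rewrite eqxx.
Qed.

Lemma subdb_memf (X : db) f : subdb X D -> memf X f -> memf D f.
Proof. by case: f => R u H; rewrite /memf /=; case: (H R) => /fsubsetP s _; apply: s. Qed.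

End Facts.

Section Repairs.
Variables (K : comPzSemiRingType) (Sym : finType) (ar : Sym -> nat) (kl : Sym -> nat)
  (A : choiceType) (D : kdb ar A K) (rels : seq Sym).
Notation fact := (fact ar A).
Notation memf := (@memf K Sym ar A).
Notation keyeq := (keyeq kl).

Lemma keyeq_refl (f : fact) : keyeq f f.
Proof. by split. Qed.

Lemma repair_sub t : repair kl rels D t -> subdb t D.
Proof. by case. Qed.

Lemma repair_keys t : repair kl rels D t ->
  forall f1 f2, tag f1 \in rels -> memf t f1 -> memf t f2 -> keyeq f1 f2 -> f1 = f2.
Proof. by case=> _ [/sat_keysP H _]. Qed.

Lemma block_nonempty s fB : repair kl rels D s -> memf D fB -> tag fB \in rels ->
  exists fA, memf s fA /\ keyeq fA fB.
Proof.
move=> Hs HB Hr; apply: NNPP => Hn.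
have Hn' : forall f, memf s f -> ~ keyeq f fB by move=> f m k; apply: Hn; exists f.
case: (Hs) => Hsub [Hk Hmax]; apply: Hmax.
set D2 := subD D (fun f => memf s f || (f == fB)).
have HD2 := subD_sub D (fun f => memf s f || (f == fB)).
exists D2; split; [|split; [|split=> //]].
- apply/(subdbP Hsub HD2) => f m; rewrite memf_subD m orTb andbT.
  exact: subdb_memf Hsub m.
- move/(subdbP HD2 Hsub) => H.
  have : memf s fB by apply: H; rewrite memf_subD HB eqxx orbT.
  by move=> m; apply: (Hn' _ m); apply: keyeq_refl.
- apply/sat_keysP => f1 f2 Hr1; rewrite !memf_subD => /andP[_ /orP[m1|/eqP e1]] /andP[_ /orP[m2|/eqP e2]] k.
  + exact: (repair_keys Hs Hr1 m1 m2 k).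
  + by subst f2; case: (Hn' _ m1 k).
  + by subst f1; case: (Hn' _ m2 (keyeq_sym k)).
  + by rewrite e1 e2.
Qed.

Lemma swap_repair t fA fB : repair kl rels D t -> memf t fB -> memf D fA -> keyeq fA fB ->
  fA != fB -> tag fB \in rels ->
  repair kl rels D (subD D (fun f => (memf t f && (f != fB)) || (f == fA))).
Proof.
move=> Ht mB mA kAB nAB Hr.
have Hsub := repair_sub Ht.
have HrA : tag fA \in rels by case: kAB => e _; rewrite e.
have nA : ~~ memf t fA.
  by apply/negP => m; move/eqP: nAB; apply; apply: (repair_keys Ht HrA m mB kAB).
set P := (fun f => (memf t f && (f != fB)) || (f == fA)).
have Ht' := subD_sub D P.
have mt' f : memf (subD D P) f = (memf t f && (f != fB)) || (f == fA).
  rewrite memf_subD /P; case: (f =P fA) => [->|_]; first by rewrite mA orbT.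
  by rewrite orbF; case m: (memf t f); rewrite ?andbF // (subdb_memf Hsub m).
split=> //; split.
- apply/sat_keysP => f1 f2 Hr1; rewrite !mt' => /orP[/andP[m1 n1]|/eqP e1] /orP[/andP[m2 n2]|/eqP e2] k.
  + exact: (repair_keys Ht Hr1 m1 m2 k).
  + subst f2; have k' := keyeq_trans k kAB.
    by move/eqP: n1; case; apply: (repair_keys Ht Hr1 m1 mB k').
  + subst f1; have k' := keyeq_trans (keyeq_sym kAB) k.
    by move/eqP: n2; case; apply: esym; apply: (repair_keys Ht Hr mB m2 k').
  + by rewrite e1 e2.
- case=> D2 [s1 [s2 [s3 k2]]].
  have mAD2 : memf D2 fA by apply: (proj1 (subdbP Ht' s3) s1); rewrite mt' eqxx orbT.
  move/sat_keysP: k2 => k2.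
  have nBD2 : ~~ memf D2 fB.
    apply/negP => m; move/eqP: nAB; apply; exact: (k2 _ _ HrA mAD2 m kAB).
  case: Ht => _ [_ Hmax]; apply: Hmax.
  set Q := (fun f => (memf D2 f && (f != fA)) || (f == fB)).
  have HQ := subD_sub D Q.
  have mQ f : memf (subD D Q) f = (memf D2 f && (f != fA)) || (f == fB).
    rewrite memf_subD /Q; case: (f =P fB) => [->|_]; first by rewrite (subdb_memf Hsub mB) orbT.
    by rewrite orbF; case m: (memf D2 f); rewrite ?andbF // (subdb_memf s3 m).
  exists (subD D Q); split; [|split; [|split=> //]].
  + apply/(subdbP Hsub HQ) => f m; rewrite mQ.
    case: (f =P fB) => [-> |/eqP nfB]; first by rewrite orbT.
    rewrite orbF; apply/andP; split.
    * by apply: (proj1 (subdbP Ht' s3) s1); rewrite mt' m nfB.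
    * by apply/eqP => e; subst f; rewrite m in nA.
  + move/(subdbP HQ Hsub) => H; apply: s2; apply/(subdbP s3 Ht') => f m.
    rewrite mt'; case: (f =P fA) => [->|/eqP nfA]; first by rewrite orbT.
    have nfB : f != fB by apply/eqP => e; subst f; rewrite m in nBD2.
    by rewrite orbF nfB andbT; apply: H; rewrite mQ m nfA.
  + apply/sat_keysP => f1 f2 Hr1; rewrite !mQ => /orP[/andP[m1 n1]|/eqP e1] /orP[/andP[m2 n2]|/eqP e2] k.
    * exact: (k2 _ _ Hr1 m1 m2 k).
    * subst f2; have k' := keyeq_trans k (keyeq_sym kAB).
      by move/eqP: n1; case; apply: (k2 _ _ Hr1 m1 mAD2 k').
    * subst f1; have k' := keyeq_trans kAB k.
      by move/eqP: n2; case; apply: esym; apply: (k2 _ _ HrA mAD2 m2 k').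
    * by rewrite e1 e2.
Qed.

End Repairs.

Lemma uniq_map_inj (T1 T2 : eqType) (f : T1 -> T2) (s : seq T1) a b :
  uniq (map f s) -> a \in s -> b \in s -> f a = f b -> a = b.
Proof.
elim: s => [|c s IH] //= /andP[nc u]; rewrite !inE => /orP[/eqP->|ia] /orP[/eqP->|ib] e //.
- by move: nc; rewrite e; move/negP; case; apply: map_f.
- by move: nc; rewrite -e; move/negP; case; apply: map_f.
- exact: IH.
Qed.

Section Query.
Variables (K : comPzSemiRingType) (Sym : finType) (ar : Sym -> nat) (kl : Sym -> nat)
  (A V : choiceType) (q : cq ar V) (gamma : V -> A) (x : V).
Notation db := (kdb ar A K).
Notation fact := (fact ar A).
Notation memf := (@memf K Sym ar A).
Notation keyeq := (keyeq kl).
Notation inst := (@inst Sym ar A V).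

Definition Emb (t : db) (th : V -> A) : Prop :=
  (forall v, v \notin cq_bound q -> th v = gamma v) /\
  (forall G, G \in cq_atoms q -> memf t (inst th G)).
Definition Sx (t : db) (c : A) : Prop := exists th, Emb t th /\ th x = c.

Lemma att_bound G v : attacks kl q G v -> v \in cq_bound q.
Proof.
case=> x1 [p [Hall [_ [<- _]]]]; move/allP: Hall; apply.
exact: mem_last.
Qed.

Lemma att_ext G u H w : attacks kl q G u -> H \in cq_atoms q -> u \in avars H ->
  w \in avars H -> w \in cq_bound q -> ~ key_closure kl q G w -> attacks kl q G w.
Proof.
case=> x1 [p [Hall [Hx1 [Hl [Hp Hn]]]]] HH uH wH wb wn.
exists x1, (rcons p w); split; [|split=> //; split; [|split]].
- by rewrite -rcons_cons all_rcons wb.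
- by rewrite last_rcons.
- rewrite rcons_path Hp /= Hl; apply/hasP; exists H => //; by rewrite uH wH.
- move=> z; rewrite -rcons_cons mem_rcons inE => /orP[/eqP->|]; [exact: wn|exact: Hn].
Qed.

Lemma att_nonkey G w : w \in anonkey kl G -> w \in cq_bound q -> ~ key_closure kl q G w ->
  attacks kl q G w.
Proof.
move=> wk wb wn; exists w, [::]; split; [by rewrite /= wb|split=> //; split=> //; split=> //].
by move=> z; rewrite inE => /eqP->.
Qed.

Lemma key_closure_key G w : G \in cq_atoms q -> w \in akey kl G -> key_closure kl q G w.
Proof.
move=> HG wk; split.
- apply/flattenP; exists (avars G); first by apply: map_f.
  by rewrite /avars -(cat_take_drop (kl (tag G)) (tagged G : seq V)) mem_cat -/(akey kl G) wk.
- move=> T r _ t1 t2 _ _ Ha u; rewrite inE => /eqP->; exact: Ha.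
Qed.

Lemma closure_agree G (th mu : V -> A) :
  (forall u, u \in akey kl G -> th u = mu u) ->
  (forall H, H \in cq_atoms q -> tag H != tag G ->
     (forall u, u \in akey kl H -> th u = mu u) -> forall u, u \in avars H -> th u = mu u) ->
  forall v, key_closure kl q G v -> th v = mu v.
Proof.
move=> HG HH v [_ Hent].
have := Hent A (fun t => t = th \/ t = mu).
have Hfd : forall fd, fd \in sigma_minus kl q G -> fd_holds (fun t => t = th \/ t = mu) fd.1 fd.2.
  move=> fd /mapP[H]; rewrite mem_filter => /andP[nH iH] -> /=.
  move=> t1 t2 [->|->] [->|->] Ha u uH //.
  - exact: (HH H iH nH Ha).
  - apply: esym; apply: (HH H iH nH) => // z zH; apply: esym; exact: Ha.
move=> /(_ Hfd th mu (or_introl erefl) (or_intror erefl) HG v); apply.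
by rewrite inE.
Qed.

Hypothesis sjf : self_join_free q.
Hypothesis unatt : unattacked kl q x.

Lemma sjf_eq G H : G \in cq_atoms q -> H \in cq_atoms q -> tag G = tag H -> G = H.
Proof. move=> iG iH; exact: (uniq_map_inj sjf iG iH). Qed.

Lemma inst_val th G : (tagged (inst th G) : seq A) = map th (tagged G : seq V).
Proof. by []. Qed.

Lemma step_lemma (t t' : db) th mu G fA fB :
  (forall f1 f2, tag f1 \in cq_rels q -> memf t f1 -> memf t f2 -> keyeq f1 f2 -> f1 = f2) ->
  G \in cq_atoms q -> Emb t th -> inst th G = fB -> keyeq fA fB ->
  (forall f, memf t' f -> memf t f \/ f = fA) ->
  Emb t' mu -> exists nu, Emb t nu /\ nu x = mu x.
Proof.
move=> Hk HG [Hth1 Hth2] eB kAB Ht' [Hmu1 Hmu2].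
have tA : tag fA = tag G by case: kAB => e _; rewrite e -eB.
have relH H : H \in cq_atoms q -> tag H \in cq_rels q by move=> iH; apply: map_f.
have mu_t H : H \in cq_atoms q -> tag H != tag G -> memf t (inst mu H).
  move=> iH nH; case: (Ht' _ (Hmu2 H iH)) => // e.
  by move: nH; rewrite -tA -e eqxx.
case: (eqVneq (inst mu G) fA) => [eA|nA]; last first.
  exists mu; split=> //; split=> // H iH.
  case: (eqVneq (tag H) (tag G)) => [e|n]; last exact: mu_t.
  have -> := sjf_eq iH HG e.
  by case: (Ht' _ (Hmu2 G HG)) => // e'; rewrite e' eqxx in nA.
have agK : forall u, u \in akey kl G -> th u = mu u.
  move=> u uk; case: kAB => _; rewrite -eA -eB !inst_val /= -!map_take => e.
  by move/eq_in_map: (esym e); apply.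
have agH : forall H, H \in cq_atoms q -> tag H != tag G ->
     (forall u, u \in akey kl H -> th u = mu u) -> forall u, u \in avars H -> th u = mu u.
  move=> H iH nH Ha u uH.
  have e : inst th H = inst mu H.
    apply: (Hk (inst th H) (inst mu H) (relH H iH) (Hth2 H iH) (mu_t H iH nH)); split=> //=.
    by rewrite -!map_take; apply/eq_in_map.
  by move/fact_val: e; rewrite !inst_val => /eq_in_map; apply.
have agC := closure_agree agK agH.
pose nu v := if excluded_middle_informative (attacks kl q G v) then th v else mu v.
have nuA v : attacks kl q G v -> nu v = th v.
  by rewrite /nu; case: excluded_middle_informative.
have nuN v : ~ attacks kl q G v -> nu v = mu v.
  by rewrite /nu; case: excluded_middle_informative.
exists nu; split; last by apply: nuN; apply: unatt.
split.
- move=> v vb; rewrite nuN ?Hmu1 //; by move/att_bound; apply/negP.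
- move=> H iH.
  case: (classic (exists u, u \in avars H /\ attacks kl q G u)) => [[u [uH au]]|Hn].
  + have -> : inst nu H = inst th H.
      apply: fact_eq => //; rewrite !inst_val; apply/eq_in_map => w wH.
      case: (classic (attacks kl q G w)) => [aw|naw]; first by rewrite nuA.
      rewrite nuN //; case: (boolP (w \in cq_bound q)) => wb.
      * case: (classic (key_closure kl q G w)) => [kc|nkc]; first by rewrite agC.
        by case: naw; apply: (att_ext au iH uH wH wb nkc).
      * by rewrite Hth1 // Hmu1.
    exact: Hth2.
  + have e1 : inst nu H = inst mu H.
      apply: fact_eq => //; rewrite !inst_val; apply/eq_in_map => w wH.
      by rewrite nuN // => aw; apply: Hn; exists w.
    case: (eqVneq (tag H) (tag G)) => [e|n]; last by rewrite e1; apply: mu_t.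
    have eHG := sjf_eq iH HG e; subst H.
    have -> : inst nu G = inst th G.
      apply: fact_eq => //; rewrite !inst_val; apply/eq_in_map => w wH.
      have naw : ~ attacks kl q G w by move=> aw; apply: Hn; exists w.
      rewrite nuN //; case: (boolP (w \in cq_bound q)) => wb.
      * case: (classic (key_closure kl q G w)) => [kc|nkc]; first by rewrite agC.
        move: wH; rewrite /avars -(cat_take_drop (kl (tag G)) (tagged G : seq V)) mem_cat.
        case/orP => wk; first by case: nkc; apply: key_closure_key.
        by case: naw; apply: att_nonkey.
      * by rewrite Hth1 // Hmu1.
    exact: Hth2.
Qed.

End Query.

Lemma count_le_in (T : eqType) (p p' : pred T) (s : seq T) :
  (forall y, y \in s -> p' y -> p y) -> (count p' s <= count p s)%N.
Proof.
elim: s => [|a s IH] //= H.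
have := IH (fun y ys => H y (ltac:(by rewrite inE ys orbT))).
case pa: (p' a); first by rewrite (H a (mem_head _ _) pa) !add1n ltnS.
by rewrite add0n => h; apply: (leq_trans h); apply: leq_addl.
Qed.

Lemma count_lt_in (T : eqType) (p p' : pred T) (s : seq T) y0 :
  (forall y, y \in s -> p' y -> p y) -> y0 \in s -> p y0 -> ~~ p' y0 ->
  (count p' s < count p s)%N.
Proof.
elim: s => [|a s IH] //= H; rewrite inE => /orP[/eqP<-|iy] py np.
- rewrite py (negbTE np) add0n add1n ltnS.
  by apply: count_le_in => y ys; apply: H; rewrite inE ys orbT.
- have h := IH (fun y ys => H y (ltac:(by rewrite inE ys orbT))) iy py np.
  case pa: (p' a); first by rewrite (H a (mem_head _ _) pa) !add1n ltnS.
  by rewrite add0n; apply: (leq_trans h); apply: leq_addl.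
Qed.

Section Main.
Variables (K : comPzSemiRingType) (Sym : finType) (ar : Sym -> nat) (kl : Sym -> nat)
  (A V : choiceType) (q : cq ar V) (D : kdb ar A K) (gamma : V -> A) (x : V).
Notation db := (kdb ar A K).
Notation fact := (fact ar A).
Notation memf := (@memf K Sym ar A).
Notation keyeq := (keyeq kl).
Notation inst := (@inst Sym ar A V).
Notation Emb := (Emb q gamma).
Notation Sx := (Sx q gamma x).
Notation rels := (cq_rels q).
Notation repair := (repair kl rels D).

Hypothesis sjf : self_join_free q.
Hypothesis unatt : unattacked kl q x.

Definition allD : seq fact :=
  flatten [seq [seq existT (fun R => (ar R).-tuple A) R u | u <- finsupp (D R)] | R <- enum Sym].

Lemma mem_allD f : memf D f -> f \in allD.
Proof.
case: f => R u m; apply/flatten_mapP; exists R; first by rewrite mem_enum.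
by apply/mapP; exists u.
Qed.

Definition meas (s t : db) := count (fun f => memf t f && ~~ memf s f) allD.

Lemma improve s t c : repair s -> ~ Sx s c -> repair t -> Sx t c ->
  exists t', repair t' /\ (meas s t' < meas s t)%N /\ (forall d, Sx t' d -> Sx t d).
Proof.
move=> Hs nSs Ht [th [[Hth1 Hth2] thx]].
have [G [iG nG]] : exists G, G \in cq_atoms q /\ ~~ memf s (inst th G).
  apply: NNPP => H; apply: nSs; exists th; split=> //; split=> // G iG.
  by apply: negbNE; apply/negP => m; apply: H; exists G; split=> //; apply/negP.
set fB := inst th G.
have mB : memf t fB := Hth2 G iG.
have Hsub := repair_sub Ht.
have mBD : memf D fB := subdb_memf Hsub mB.
have rB : tag fB \in rels by apply: map_f.
have [fA [mA kAB]] := block_nonempty Hs mBD rB.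
have nG' : ~~ memf s fB by [].
have nAB : fA != fB by apply/eqP => e; move: nG'; rewrite -e mA.
have mAD : memf D fA := subdb_memf (repair_sub Hs) mA.
set P := (fun f => (memf t f && (f != fB)) || (f == fA)).
have Ht' := swap_repair Ht mB mAD kAB nAB rB.
have mt' f : memf (subD D P) f = (memf t f && (f != fB)) || (f == fA).
  rewrite memf_subD /P; case: (f =P fA) => [->|_]; first by rewrite mAD orbT.
  by rewrite orbF; case m: (memf t f); rewrite ?andbF // (subdb_memf Hsub m).
exists (subD D P); split=> //; split.
- apply: (@count_lt_in _ _ _ _ fB).
  + move=> f _; rewrite mt' => /andP[/orP[/andP[-> _]|/eqP->]] //.
    by rewrite mA.
  + exact: mem_allD.
  + by rewrite mB nG'.
  + by rewrite mt' eqxx andbF /= eq_sym (negbTE nAB).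
- move=> d [mu [Hmu mux]].
  have Hk := repair_keys Ht.
  have Hsw : forall f, memf (subD D P) f -> memf t f \/ f = fA.
    by move=> f; rewrite mt' => /orP[/andP[m _]|/eqP e]; [left|right].
  have [nu [Hnu nux]] := step_lemma sjf unatt Hk iG (conj Hth1 Hth2) erefl kAB Hsw Hmu.
  by exists nu; split=> //; rewrite nux.
Qed.

Lemma greedy s c : repair s -> ~ Sx s c -> forall n t, repair t -> (meas s t <= n)%N ->
  exists t', repair t' /\ (forall d, Sx t' d -> Sx t d) /\ ~ Sx t' c.
Proof.
move=> Hs nSs n; elim: n => [|n IH] t Ht Hm.
- case: (classic (Sx t c)) => [St|nSt]; last by exists t.
  have [t' [_ [lt _]]] := improve Hs nSs Ht St.
  by move: (leq_trans lt Hm).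
- case: (classic (Sx t c)) => [St|nSt]; last by exists t.
  have [t' [Ht' [lt sub]]] := improve Hs nSs Ht St.
  have [t'' [Ht'' [sub' n'']]] := IH t' Ht' (leq_trans lt Hm).
  exists t''; split=> //; split=> // d Hd; apply: sub; exact: sub'.
Qed.

End Main.

Section Semi.
Variable (K : comPzSemiRingType).
Hypothesis posK : positive_semiring K.

Lemma sum_nz (I : finType) (F : I -> K) : \sum_(i : I) F i != 0 -> exists i, F i != 0.
Proof.
move=> Hs; apply: NNPP => H; move/eqP: Hs; apply; apply: big1 => i _.
by apply/eqP; apply: negbNE; apply/negP => h; apply: H; exists i.
Qed.

Lemma prod_nz (T : eqType) (s : seq T) (F : T -> K) :
  \prod_(a <- s) F a != 0 -> forall a, a \in s -> F a != 0.
Proof.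
elim: s => [|b s IH] //; rewrite big_cons => Hp a; rewrite inE => /orP[/eqP->|ias].
- by apply: contra Hp => /eqP ->; rewrite mul0r.
- by apply: IH => //; apply: contra Hp => /eqP ->; rewrite mulr0.
Qed.

Lemma prod_nz' (T : eqType) (s : seq T) (F : T -> K) : (1 : K) != 0 ->
  (forall a, a \in s -> F a != 0) -> \prod_(a <- s) F a != 0.
Proof.
move=> one; elim: s => [|b s IH] H; first by rewrite big_nil.
rewrite big_cons; apply/eqP => /(proj2 posK) [/eqP|/eqP].
- by apply/negP; apply: H; rewrite mem_head.
- by apply/negP; apply: IH => a ias; apply: H; rewrite inE ias orbT.
Qed.

Lemma sum_nz' (I : finType) (F : I -> K) i : F i != 0 -> \sum_(i : I) F i != 0.
Proof.
move=> Fi; rewrite (bigD1 i) //=; apply/eqP => /(proj1 posK) [e _].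
by rewrite e eqxx in Fi.
Qed.

End Semi.

Section Final.
Variables (K : comPzSemiRingType) (Sym : finType) (ar : Sym -> nat) (kl : Sym -> nat)
  (A V : choiceType) (q : cq ar V) (gamma : V -> A) (x : V).
Notation db := (kdb ar A K).
Notation memf := (@memf K Sym ar A).
Notation inst := (@inst Sym ar A V).
Notation Emb := (Emb q gamma).

Lemma one_nz (t : db) (al : V -> A) (Q : cq ar V) : models t al Q -> (1 : K) != 0.
Proof.
rewrite /models => H; apply/eqP => e; move/negP: H; apply; apply/eqP.
by rewrite -[LHS]mulr1 e mulr0.
Qed.

Lemma models_Emb (t : db) : models t gamma q -> exists th, Emb t th.
Proof.
rewrite /models /cq_value => /sum_nz [f Hf].
exists (extend gamma f); split.
- move=> v vb; rewrite /extend; case: insubP => // u ub e; exfalso.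
  by move: vb; rewrite -e fsvalP.
- move=> G iG; have := prod_nz Hf iG.
  by rewrite /memf /= mem_finsupp.
Qed.

Lemma models_adom (t : db) : models t gamma q -> x \in cq_bound q -> exists a, a \in adom t.
Proof.
rewrite /models /cq_value => /sum_nz [f _] xb.
by exists (val (f [` xb])); apply: fsvalP.
Qed.

Lemma adom_mem (t : db) th G v : memf t (inst th G) -> v \in avars G -> th v \in adom t.
Proof.
move=> m vG; apply/bigfcupP; exists (tag G); first by rewrite mem_enum.
apply/bigfcupP; exists (map_tuple th (tagged G)); first by rewrite andbT.
by apply/imfsetP; exists (th v) => //=; apply: map_f.
Qed.

Lemma Emb_models (t : db) th a0 : positive_semiring K -> (1 : K) != 0 ->
  Emb t th -> a0 \in adom t -> x \in cq_bound q ->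
  models t (upd gamma x (th x)) (cq_free_var q x).
Proof.
move=> posK one [Hth1 Hth2] a0t xb.
pose f0 : {ffun cq_bound (cq_free_var q x) -> adom t} :=
  [ffun v => if insub (th (val v)) is Some w then w else [` a0t]].
rewrite /models /cq_value; apply: (sum_nz' posK (i := f0)).
apply: prod_nz' => // G iG.
have -> : map_tuple (extend (upd gamma x (th x)) f0) (tagged G) = map_tuple th (tagged G).
  apply: val_inj => /=; apply/eq_in_map => v vG.
  rewrite /extend; case: insubP => [u ub e|nb].
  - rewrite ffunE; case: insubP => [w wt ew|nt].
    + by rewrite ew e.
    + by move: nt; rewrite e (adom_mem (Hth2 G iG) vG).
  - rewrite /upd; case: (eqVneq v x) => [->|nvx] //.
    rewrite Hth1 //; apply/negP => vb; move/negP: nb; apply.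
    by rewrite /= in_fsetD1 nvx vb.
by have := Hth2 G iG; rewrite /memf /= mem_finsupp.
Qed.

End Final.

Theorem lemma4p13
  (K : comPzSemiRingType) (Sym : finType) (ar : Sym -> nat) (kl : Sym -> nat)
  (A V : choiceType)
  (q : cq ar V) (D : kdb ar A K) (gamma : V -> A) (x : V) :
  positive_semiring K -> naturally_ordered K ->
  self_join_free q ->
  adom D != fset0%fset ->
  (forall v, gamma v \in adom D) ->
  (forall D' : kdb ar A K, repair kl (cq_rels q) D D' -> models D' gamma q) ->
  x \in cq_bound q ->
  unattacked kl q x ->
  exists c : A, c \in adom D /\
    forall D' : kdb ar A K, repair kl (cq_rels q) D D' ->
      models D' (upd gamma x c) (cq_free_var q x).
Proof.
move=> posK _ sjf adomD _ Hall xb unatt.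
have [c0 c0D] : exists c, c \in adom D by apply/fset0Pn.
case: (classic (exists G, G \in cq_atoms q /\ x \in avars G)) => [[G0 [iG0 xG0]]|nx].
- case: (classic (exists r, repair kl (cq_rels q) D r)) => [[r0 Hr0]|nr]; last first.
    by exists c0; split=> // D' HD'; case: nr; exists D'.
  have SxD : forall r c, repair kl (cq_rels q) D r -> Sx q gamma x r c -> c \in adom D.
    move=> r c Hr [th [[_ H2] <-]]; apply: (adom_mem (t:=D) _ xG0).
    exact: subdb_memf (repair_sub Hr) (H2 G0 iG0).
  have Snz : forall r, repair kl (cq_rels q) D r -> exists c, Sx q gamma x r c.
    move=> r Hr; have [th Hth] := models_Emb (Hall r Hr); by exists (th x), th.
  have key : forall n (X : {fset A}) r, (#|` X| <= n)%N -> repair kl (cq_rels q) D r ->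
      (forall c, Sx q gamma x r c -> c \in X) ->
      exists c, forall s, repair kl (cq_rels q) D s -> Sx q gamma x s c.
    elim=> [|n IH] X r HX Hr HS; have [c Hc] := Snz r Hr; have cX := HS c Hc.
    + by move: HX; rewrite (cardfsD1 c X) cX.
    + case: (classic (forall s, repair kl (cq_rels q) D s -> Sx q gamma x s c)) => [H|H].
        by exists c.
      have [s [Hs nSs]] : exists s, repair kl (cq_rels q) D s /\ ~ Sx q gamma x s c.
        apply: NNPP => H'; apply: H => s Hs; apply: NNPP => n'; apply: H'; exists s; split=> //.
      have [t [Ht [sub nt]]] := greedy sjf unatt Hs nSs Hr (leqnn _).
      apply: (IH (X `\ c) t) => //.
      * by move: HX; rewrite (cardfsD1 c X) cX add1n ltnS.
      * move=> d Hd; rewrite in_fsetD1 (HS d (sub d Hd)) andbT.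
        by apply/eqP => e; subst d; exact: nt Hd.
  have [c Hc] := key _ (adom D) r0 (leqnn _) Hr0 (fun c => SxD r0 c Hr0).
  exists c; split; first exact: SxD r0 c Hr0 (Hc r0 Hr0).
  move=> D' HD'; have [th [Hth thx]] := Hc D' HD'.
  rewrite -thx; apply: (Emb_models (a0 := th x)) => //.
  + exact: one_nz (Hall D' HD').
  + exact: adom_mem (proj2 Hth G0 iG0) xG0.
- exists c0; split=> // D' HD'.
  have HM := Hall D' HD'.
  have [th [Hth1 Hth2]] := models_Emb HM.
  have [a0 a0D] := models_adom HM xb.
  pose th' := upd th x c0.
  have E : Emb q gamma D' th'.
    split.
    * move=> v vb; rewrite /th' /upd; case: (eqVneq v x) => [e|_]; last exact: Hth1.
      by rewrite e xb in vb.
    * move=> G iG; have -> : inst th' G = inst th G.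
        apply: fact_eq => //; rewrite !inst_val; apply/eq_in_map => v vG.
        rewrite /th' /upd; case: (eqVneq v x) => // e; subst v; case: nx; by exists G.
      exact: Hth2.
  have -> : c0 = th' x by rewrite /th' /upd eqxx.
  apply: (Emb_models (a0:=a0)) => //; exact: one_nz HM.
Qed.
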